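(* Let $\mathcal{A}$ be a finite totally ordered alphabet and let $\mathbf{Plax}(\mathcal{A})$ be the plactic monoid over $\mathcal{A}$. Then $\mathbf{Plax}(\mathcal{A})$ is of type 1: for every function $\sigma:\mathcal{A}\to\mathbb{N}_{\geq 2}$, the map $\phi_\sigma=\theta\times\operatorname{ev}_\sigma:\mathbf{Plax}(\mathcal{A},\sigma)\to \mathbf{Plax}(\mathcal{A},2)\times\mathbf{Com}(\mathcal{A},\sigma)$ is injective.
   Context: The plactic monoid $\mathbf{Plax}(\mathcal{A})$ is the quotient of the free monoid $\mathcal{A}^*$ by the relations $acb=cab$ for $a\le b<c$ and $bac=bca$ for $a<b\le c$ ($a,b,c\in\mathcal{A}$). For $\sigma:\mathcal{A}\to\mathbb{N}_{\geq2}$, $\mathbf{Plax}(\mathcal{A},\sigma)$ is the quotient of $\mathbf{Plax}(\mathcal{A})$ obtained by adding the relations $a^{\sigma(a)}=a$ for every $a\in\mathcal{A}$; $\mathbf{Plax}(\mathcal{A},2)$ is the case where $\sigma$ is constant equal to $2$. $\mathbf{Com}(\mathcal{A},\sigma)$ is the quotient of the free commutative monoid on $\mathcal{A}$ by the relations $a^{\sigma(a)}=a$, $a\in\mathcal{A}$. The map $\theta:\mathbf{Plax}(\mathcal{A},\sigma)\to\mathbf{Plax}(\mathcal{A},2)$ and $\operatorname{ev}_\sigma:\mathbf{Plax}(\mathcal{A},\sigma)\to\mathbf{Com}(\mathcal{A},\sigma)$ are the natural surjective morphisms (induced by the identity on $\mathcal{A}$), and $\phi_\sigma(x)=(\theta(x),\operatorname{ev}_\sigma(x))$.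 *)

(* Defs.v *)
From Stdlib Require Import Relations.Relation_Definitions Relations.Relation_Operators.
From mathcomp Require Import all_boot.
Set Implicit Arguments. Unset Strict Implicit. Unset Printing Implicit Defensive.

Section Plactic.
Variable n : nat.
Notation word := (seq 'I_n).

Inductive knuth_step : word -> word -> Prop :=
| knuth1 (u v : word) (a b c : 'I_n) :
    a <= b -> b < c -> knuth_step (u ++ [:: a; c; b] ++ v) (u ++ [:: c; a; b] ++ v)
| knuth2 (u v : word) (a b c : 'I_n) :
    a < b -> b <= c -> knuth_step (u ++ [:: b; a; c] ++ v) (u ++ [:: b; c; a] ++ v).

Inductive pow_step (sigma : 'I_n -> nat) : word -> word -> Prop :=
| powstep (u v : word) (a : 'I_n) :
    pow_step sigma (u ++ nseq (sigma a) a ++ v) (u ++ [:: a] ++ v).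

Inductive comm_step : word -> word -> Prop :=
| commstep (u v : word) (a b : 'I_n) :
    comm_step (u ++ [:: a; b] ++ v) (u ++ [:: b; a] ++ v).

Definition plax_sigma_cong (sigma : 'I_n -> nat) : relation word :=
  clos_refl_sym_trans word (fun x y => knuth_step x y \/ pow_step sigma x y).

Definition com_sigma_cong (sigma : 'I_n -> nat) : relation word :=
  clos_refl_sym_trans word (fun x y => comm_step x y \/ pow_step sigma x y).

End Plactic.

(* Main.v *)
Require Import Defs.
From Stdlib Require Import Relations.Relation_Definitions Relations.Relation_Operators.
From Stdlib Require Import Setoid Morphisms.
From mathcomp Require Import all_boot zify.
Set Implicit Arguments. Unset Strict Implicit. Unset Printing Implicit Defensive.

Section Pl.
Variable n : nat.
Notation word := (seq 'I_n).
Notation ks := (@knuth_step n).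

Definition pl : relation word := clos_refl_sym_trans word (@knuth_step n).

Global Instance pl_equiv : Equivalence pl.
Proof.
split; [exact: rst_refl | exact: rst_sym | exact: rst_trans].
Qed.

Lemma knuth_ctx p q x y : ks x y -> ks (p ++ x ++ q) (p ++ y ++ q).
Proof.
case=> u v a b c H1 H2.
- have := knuth1 (p ++ u) (v ++ q) H1 H2; by rewrite -!catA.
- have := knuth2 (p ++ u) (v ++ q) H1 H2; by rewrite -!catA.
Qed.

Lemma pl_ctx p q x y : pl x y -> pl (p ++ x ++ q) (p ++ y ++ q).
Proof.
elim=> [x' y' H| x'| x' y' _ IH| x' y' z' _ IH1 _ IH2].
- by apply: rst_step; apply: knuth_ctx.
- reflexivity.
- by symmetry.
- by transitivity (p ++ y' ++ q).
Qed.

Global Instance cat_pl : Proper (pl ==> pl ==> pl) (@cat 'I_n).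
Proof.
move=> x x' Hx y y' Hy; transitivity (x' ++ y).
- by have := pl_ctx [::] y Hx.
- by have := pl_ctx x' [::] Hy; rewrite !cats0.
Qed.

Global Instance cons_pl : Proper (eq ==> pl ==> pl) (@cons 'I_n).
Proof.
move=> a b -> x y H; rewrite -(cat1s b x) -(cat1s b y); exact: (cat_pl (rst_refl _ _ [:: b]) H).
Qed.

Lemma kn1 (a b c : 'I_n) : a <= b -> b < c -> pl [:: a; c; b] [:: c; a; b].
Proof. by move=> H1 H2; apply: rst_step; exact: (knuth1 [::] [::] H1 H2). Qed.

Lemma kn2 (a b c : 'I_n) : a < b -> b <= c -> pl [:: b; a; c] [:: b; c; a].
Proof. by move=> H1 H2; apply: rst_step; exact: (knuth2 [::] [::] H1 H2). Qed.

Definition le : rel 'I_n := fun a b => (a <= b)%N.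
Lemma le_trans : transitive le.
Proof. by move=> a b c; apply: leq_trans. Qed.

Lemma moveC (X : word) (z c : 'I_n) :
  sorted le (X ++ [:: z]) -> z < c -> pl (X ++ [:: c; z]) (c :: X ++ [:: z]).
Proof.
elim: X => [|x X IH] Hs Hzc; first reflexivity.
rewrite /= (path_sortedE le_trans) in Hs; case/andP: Hs => Hall Hs'.
transitivity (x :: c :: X ++ [:: z]); first exact: cons_pl (IH Hs' Hzc).
move: Hall Hs'; case E: (X ++ [:: z]) => [|h t]; first by move/(congr1 size): E; rewrite size_cat addn1.
move=> /= /andP [Hxh _] Hs2.
have Hhz : h <= z.
  have : z \in h :: t by rewrite -E mem_cat inE eqxx orbT.
  rewrite inE => /orP [/eqP -> //|Hz].
  move: Hs2; rewrite /= (path_sortedE le_trans) => /andP [/allP Ha _].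
  exact: Ha.
have H := kn1 Hxh (leq_ltn_trans Hhz Hzc).
rewrite E; exact: (pl_ctx [::] t H).
Qed.


Fixpoint bump (R : word) (x : 'I_n) : option ('I_n * word) :=
  if R is r :: R' then
    if x < r then Some (r, x :: R')
    else if bump R' x is Some (b, R'') then Some (b, r :: R'') else None
  else None.

Lemma bump_None R x : (bump R x == None) = all (fun z : 'I_n => z <= x) R.
Proof.
elim: R => [|r R IH] //=.
case: ltnP => Hr /=; first by [].
by case: (bump R x) IH => [[b R'']|] /= <-.
Qed.

Lemma bumpP R x b R' : bump R x = Some (b, R') ->
  exists u v, [/\ R = u ++ b :: v, R' = u ++ x :: v,
                  all (fun z : 'I_n => z <= x) u & x < b].
Proof.
elim: R R' => [|r R IH] R' //=.
case: ltnP => Hr.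
  by case=> <- <-; exists [::], R.
case E: (bump R x) => [[b' R'']|] //; case=> Hb HR; subst b R'.
have [u [v [E1 E2 E3 E4]]] := IH _ E.
by exists (r :: u), v; rewrite E1 E2 /= Hr E3.
Qed.

Lemma moveL (r : 'I_n) (v : word) (x : 'I_n) : sorted le (r :: v) -> x < r ->
  pl (r :: v ++ [:: x]) (r :: x :: v).
Proof.
elim: v r => [|v1 v IH] r Hs Hx; first reflexivity.
move: Hs => /= /andP [Hrv Hs].
have Hx1 : x < v1 by apply: leq_trans Hrv.
transitivity (r :: v1 :: x :: v); first exact: cons_pl (IH v1 Hs Hx1).
symmetry; exact: (pl_ctx [::] v (kn2 Hx Hrv)).
Qed.

Lemma bump_pl R x b R' : sorted le R -> bump R x = Some (b, R') ->
  pl (R ++ [:: x]) (b :: R').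
Proof.
elim: R R' => [|r R IH] R' //= Hs.
case: ltnP => Hr.
  by case=> <- <-; exact: moveL.
case E: (bump R x) => [[b' R'']|] //; case=> Hb HR; subst b R'.
have Hs' : sorted le R by apply: path_sorted Hs.
transitivity (r :: b' :: R''); first exact: cons_pl (IH _ Hs' E).
have [u [v [E1 E2 E3 E4]]] := bumpP E.
move: Hs; rewrite (path_sortedE le_trans) => /andP [/allP Hall _].
have [h [t [Eh Hrh Hhb]]] : exists h t, [/\ R'' = h :: t, r <= h & h < b'].
  move: E2 E3; case: u E1 => [|u1 u] E1 -> /=.
    by move=> _; exists x, v.
  move=> /andP [Hu1 _]; exists u1, (u ++ x :: v); split => //.
    by apply: Hall; rewrite E1 inE eqxx.
  exact: leq_ltn_trans Hu1 E4.
rewrite Eh; exact: (pl_ctx [::] t (kn1 Hrh Hhb)).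
Qed.

Lemma sorted_all_cons (r : 'I_n) R : sorted le (r :: R) = all (le r) R && sorted le R.
Proof. exact: (path_sortedE le_trans). Qed.

Lemma bump_sorted R x b R' : sorted le R -> bump R x = Some (b, R') -> sorted le R'.
Proof.
elim: R b R' => [|r R IH] b R' //= Hs.
case: ltnP => Hr.
  case=> _ <-; case: R Hs {IH} => [|r2 R] //= /andP [H1 H2].
  by rewrite H2 andbT; apply: leq_trans H1; apply: ltnW.
case E: (bump R x) => [[b' R'']|] //; case=> _ <-.
move: Hs; rewrite (path_sortedE le_trans) => /andP [Hall Hs].
rewrite sorted_all_cons (IH _ _ Hs E) andbT.
have [u [v [E1 E2 E3 E4]]] := bumpP E.
move: Hall; rewrite E1 E2 !all_cat /= => /and3P [H1 _ H3]; rewrite H1 H3 andbT; exact: Hr.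
Qed.

Lemma rcons_sorted (R : word) (x : 'I_n) : sorted le R -> all (fun z : 'I_n => z <= x) R -> sorted le (rcons R x).
Proof.
elim: R => [|r R IH] //= Hs /andP [Hr Ha].
move: Hs; rewrite -!/(sorted le (_ :: _)) !sorted_all_cons => /andP [H1 H2].
rewrite (IH H2 Ha) andbT all_rcons H1 andbT; exact: Hr.
Qed.

Fixpoint ins (T : seq word) (x : 'I_n) : seq word :=
  match T with
  | [::] => [:: [:: x]]
  | R :: T' => match bump R x with
               | None => rcons R x :: T'
               | Some (b, R') => R' :: ins T' b
               end
  end.

Definition read (T : seq word) : word := flatten (rev T).

Lemma read_cons R T : read (R :: T) = read T ++ R.
Proof. by rewrite /read rev_cons -cats1 flatten_cat /= cats0. Qed.

Lemma ins_spec T x : all (sorted le) T ->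
  all (sorted le) (ins T x) /\ pl (read T ++ [:: x]) (read (ins T x)).
Proof.
elim: T x => [|R T IH] x /=.
  by move=> _; split => //; rewrite /read /=; reflexivity.
move=> /andP [HR HT].
case E: (bump R x) => [[b R']|].
  have [H1 H2] := IH b HT.
  rewrite /= (bump_sorted HR E) H1; split => //.
  rewrite !read_cons -catA.
  transitivity (read T ++ b :: R'); first exact: (cat_pl (rst_refl _ _ _) (bump_pl HR E)).
  rewrite -cat1s catA; exact: (cat_pl H2 (rst_refl _ _ _)).
have := E; move/eqP; rewrite bump_None => Hall.
rewrite /= rcons_sorted // HT; split => //.
by rewrite !read_cons -catA cats1; reflexivity.
Qed.

Definition Ptab (w : word) : seq word := foldl ins [::] w.

Lemma Ptab_spec w : all (sorted le) (Ptab w) /\ pl w (read (Ptab w)).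
Proof.
elim/last_ind: w => [|w x [H1 H2]]; first by split => //; reflexivity.
rewrite /Ptab foldl_rcons -/(Ptab w).
have [H3 H4] := ins_spec x H1; split => //.
rewrite -cats1; transitivity (read (Ptab w) ++ [:: x]) => //.
exact: (cat_pl H2 (rst_refl _ _ _)).
Qed.

Lemma Ptab_pl w1 w2 : Ptab w1 = Ptab w2 -> pl w1 w2.
Proof.
move=> E; have [_ H1] := Ptab_spec w1; have [_ H2] := Ptab_spec w2.
by rewrite E in H1; transitivity (read (Ptab w2)) => //; symmetry.
Qed.


Lemma rcons_nseq {T : Type} (m : nat) (x : T) : rcons (nseq m x) x = nseq m.+1 x.
Proof. by elim: m => //= m ->. Qed.

Lemma bump_catL (R1 R2 : word) (x : 'I_n) : has (fun z : 'I_n => x < z) R1 ->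
  exists b R1', bump R1 x = Some (b, R1') /\ bump (R1 ++ R2) x = Some (b, R1' ++ R2).
Proof.
elim: R1 => [|r R1 IH] //=.
case: ltnP => Hr /=; first by move=> _; exists r, (x :: R1).
move=> H; have [b [R1' [E1 E2]]] := IH H.
by exists b, (r :: R1'); rewrite E1 E2.
Qed.

Lemma bump_catR (R1 R2 : word) (x : 'I_n) : all (fun z : 'I_n => z <= x) R1 ->
  bump (R1 ++ R2) x = omap (fun p => (p.1, R1 ++ p.2)) (bump R2 x).
Proof.
elim: R1 => [|r R1 IH] /=; first by case: (bump R2 x) => [[]|].
case/andP => Hr Ha; rewrite ltnNge Hr /= IH //.
by case: (bump R2 x) => [[]|].
Qed.

Lemma ord_ltF (x y : 'I_n) : x < y -> (x == y) = false.
Proof. by move=> H; apply/negbTE/eqP => E; rewrite E ltnn in H. Qed.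
Lemma ord_gtF (x y : 'I_n) : y < x -> (x == y) = false.
Proof. by move=> H; apply/negbTE/eqP => E; rewrite E ltnn in H. Qed.

Lemma ins_rel (y x : 'I_n) (R1 R2 : word) (Tr : seq word) :
  all (fun z : 'I_n => z <= y) R1 -> all (fun z : 'I_n => y < z) R2 ->
  (x < y -> y \in R1) ->
  exists R1' R2' Tr',
    [/\ ins ((R1 ++ R2) :: Tr) x = (R1' ++ R2') :: Tr',
        ins ((R1 ++ y :: R2) :: Tr) x = (R1' ++ y :: R2') :: Tr',
        all (fun z : 'I_n => z <= y) R1', all (fun z : 'I_n => y < z) R2' &
        [/\ count_mem y R1 <= count_mem y R1' + (x < y),
            size R2' <= size R2 + (y < x) &
            (x == y) -> size R2' = (size R2).-1]].
Proof.
move=> H1 H2 Hin.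
case: (ltngtP x y) => Hxy.
- have Hh : has (fun z : 'I_n => x < z) R1 by apply/hasP; exists y => //; exact: Hin.
  have [b [R1' [E1 E2]]] := bump_catL R2 Hh.
  have [b2 [R1'' [E1' E4]]] := bump_catL (y :: R2) Hh.
  rewrite E1 in E1'; case: E1' => ? ?; subst b2 R1''.
  have [u [v [Eu Ev Hu Hb]]] := bumpP E1.
  exists R1', R2, (ins Tr b); rewrite /= E2 E4; split => //.
  + move: H1; rewrite Eu Ev !all_cat /= => /and3P [-> _ ->]; by rewrite andbT ltnW.
    split; [| by rewrite addn0 | by move/eqP=> E; rewrite E ltnn in Hxy].
    rewrite Eu Ev !count_cat /=.
    have : (x == y) = false by rewrite (ord_ltF Hxy).
    move=> ->; case: (b == y); lia.
- have Ha : all (fun z : 'I_n => z <= x) R1.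
    apply/allP => z Hz /=; have := allP H1 z Hz; rewrite /=; lia.
  rewrite /= !bump_catR //= ltnNge (ltnW Hxy) /=.
  case E: (bump R2 x) => [[b R2'']|] /=.
  + have [u [v [Eu Ev Hu Hb]]] := bumpP E.
    exists R1, R2'', (ins Tr b); split => //.
    * move: H2; rewrite Eu Ev !all_cat /= => /and3P [-> _ ->]; by rewrite Hxy.
    * split => //; first by lia.
      + by rewrite Eu Ev !size_cat /=; lia.
      + by rewrite (ord_gtF Hxy).
  + exists R1, (rcons R2 x), Tr; split.
    * by rewrite rcons_cat.
    * by rewrite rcons_cat.
    * by [].
    * by rewrite all_rcons H2 Hxy.
    * split => //; first by lia.
      + by rewrite size_rcons; lia.
      + by rewrite (ord_gtF Hxy).
- have Exy : x = y := val_inj Hxy; subst x.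
  rewrite /= !bump_catR //= ltnn /=.
  case E: (bump R2 y) => [[b R2'']|] /=.
  + have [u [v [Eu Ev Hu Hb]]] := bumpP E.
    have u0 : u = [::].
      case: u Eu Ev Hu => [|u1 u] // Eu _ /= /andP [Hu1 _].
      move: H2; rewrite Eu /= => /andP [H _]; lia.
    subst u; rewrite /= in Eu Ev; subst R2 R2''.
    exists (rcons R1 y), v, (ins Tr b); rewrite -!cats1 -!catA /=; split => //.
    * by rewrite all_cat H1 /= leqnn.
    * by move: H2 => /= /andP [].
    * split; [by rewrite count_cat /= eqxx; lia | rewrite /=; lia | by []].
  + have R0 : R2 = [::].
      move/eqP: E; rewrite bump_None; case: R2 H2 => [|r R2] //= /andP [H _] /andP [H' _]; lia.
    subst R2.
    exists (rcons R1 y), [::], Tr; rewrite -!cats1 -!catA /=; split => //.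
    * by rewrite all_cat H1 /= leqnn.
    * split => //; by rewrite count_cat /= eqxx; lia.
Qed.


Lemma foldl_rel (y : 'I_n) (q : word) (R1 R2 : word) (Tr : seq word) :
  all (fun z : 'I_n => z <= y) R1 -> all (fun z : 'I_n => y < z) R2 ->
  count (fun z : 'I_n => z < y) q <= count_mem y R1 ->
  exists R1' R2' Tr',
    [/\ foldl ins ((R1 ++ R2) :: Tr) q = (R1' ++ R2') :: Tr',
        foldl ins ((R1 ++ y :: R2) :: Tr) q = (R1' ++ y :: R2') :: Tr',
        all (fun z : 'I_n => z <= y) R1', all (fun z : 'I_n => y < z) R2' &
        size R2' <= size R2 + count (fun z : 'I_n => y < z) q].
Proof.
elim: q R1 R2 Tr => [|x q IH] R1 R2 Tr H1 H2 Hc.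
  by exists R1, R2, Tr; rewrite addn0.
have Hin : x < y -> y \in R1.
  move=> Hxy; rewrite -has_pred1 has_count; move: Hc; rewrite /= Hxy; lia.
have [R1' [R2' [Tr' [E1 E2 H1' H2' [Hc' Hs' _]]]]] := ins_rel Tr H1 H2 Hin.
have Hc2 : count (fun z : 'I_n => z < y) q <= count_mem y R1'.
  move: Hc Hc'; rewrite /=; case: (x < y); lia.
have [R1'' [R2'' [Tr'' [F1 F2 G1 G2 G3]]]] := IH R1' R2' Tr' H1' H2' Hc2.
have -> : foldl ins ((R1 ++ R2) :: Tr) (x :: q) = foldl ins (ins ((R1 ++ R2) :: Tr) x) q by [].
have -> : foldl ins ((R1 ++ y :: R2) :: Tr) (x :: q) = foldl ins (ins ((R1 ++ y :: R2) :: Tr) x) q by [].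
exists R1'', R2'', Tr''; rewrite E1 E2 F1 F2; split => //.
move: G3 Hs'; rewrite /=; case: (y < x); lia.
Qed.

Lemma yrel (y : 'I_n) (k : nat) (R1 R2 : word) (Tr : seq word) :
  all (fun z : 'I_n => z <= y) R1 -> all (fun z : 'I_n => y < z) R2 ->
  size R2 <= k ->
  exists R1' Tr',
    [/\ foldl ins ((R1 ++ R2) :: Tr) (nseq k y) = R1' :: Tr',
        foldl ins ((R1 ++ y :: R2) :: Tr) (nseq k y) = rcons R1' y :: Tr' &
        all (fun z : 'I_n => z <= y) R1'].
Proof.
elim: k R1 R2 Tr => [|k IH] R1 R2 Tr H1 H2 Hs.
  case: R2 H2 Hs => // _ _; exists R1, Tr; by rewrite cats0 cats1.
have Hin : y < y -> y \in R1 by rewrite ltnn.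
have [R1' [R2' [Tr' [E1 E2 H1' H2' [_ _ Hs']]]]] := ins_rel Tr H1 H2 Hin.
have Hs2 : size R2' <= k by rewrite Hs' ?eqxx //; lia.
have [R1'' [Tr'' [F1 F2 G1]]] := IH R1' R2' Tr' H1' H2' Hs2.
have -> : foldl ins ((R1 ++ R2) :: Tr) (nseq k.+1 y) = foldl ins (ins ((R1 ++ R2) :: Tr) y) (nseq k y) by [].
have -> : foldl ins ((R1 ++ y :: R2) :: Tr) (nseq k.+1 y) = foldl ins (ins ((R1 ++ y :: R2) :: Tr) y) (nseq k y) by [].
by exists R1'', Tr''; rewrite E1 E2 F1 F2.
Qed.

Lemma ins_none R T x : bump R x = None -> ins (R :: T) x = rcons R x :: T.
Proof. by move=> /= ->. Qed.

Lemma Ptab_nseq (y : 'I_n) N : 0 < N -> Ptab (nseq N y) = [:: nseq N y].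
Proof.
elim: N => [|N IH] // _; case: N IH => [|N] IH //.
rewrite -rcons_nseq /Ptab foldl_rcons -/(Ptab _) IH // ins_none ?rcons_nseq //.
by apply/eqP; rewrite bump_None all_nseq leqnn orbT.
Qed.

Lemma transfer_pl (y : 'I_n) (q : word) N M :
  count (fun z : 'I_n => z < y) q <= N -> count (fun z : 'I_n => y < z) q < M -> 0 < N ->
  pl (nseq N y ++ q ++ nseq M y) (nseq N.+1 y ++ q ++ nseq M.-1 y).
Proof.
move=> HN HM N0; apply: Ptab_pl.
case: M HM => [|M] // HM.
rewrite /Ptab !foldl_cat -!/(Ptab _) !Ptab_nseq // -rcons_nseq foldl_rcons /=.
have E0 : [:: nseq N y] = [:: nseq N y ++ [::]] by rewrite cats0.
have E1 : [:: nseq N.+1 y] = [:: nseq N y ++ [:: y]] by rewrite cats1 rcons_nseq.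
rewrite E0 E1.
have Hc : count (fun z : 'I_n => z < y) q <= count_mem y (nseq N y)
  by rewrite count_nseq /= eqxx mul1n.
have Ha : all (fun z : 'I_n => z <= y) (nseq N y) by rewrite all_nseq leqnn orbT.
have [R1' [R2' [Tr' [F1 F2 G1 G2 G3]]]] := @foldl_rel y q (nseq N y) [::] [::] Ha isT Hc.
rewrite F1 F2.
have HR2 : size R2' <= M by move: G3 => /=; lia.
have [R1'' [Tr'' [K1 K2 K3]]] := yrel Tr' G1 G2 HR2.
rewrite K1 K2 ins_none //.
by apply/eqP; rewrite bump_None.
Qed.


Lemma pl_catl (x y z : word) : pl x y -> pl (z ++ x) (z ++ y).
Proof. move=> H; exact: (cat_pl (rst_refl _ _ z) H). Qed.
Lemma pl_catr (x y z : word) : pl x y -> pl (x ++ z) (y ++ z).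
Proof. move=> H; exact: (cat_pl H (rst_refl _ _ z)). Qed.

Lemma sorted_nn (a b : 'I_n) i m : a <= b -> sorted le (nseq i a ++ nseq m b).
Proof.
move=> H; elim: i => [|i IH] /=.
  elim: m => [|m IH'] //; case: m IH' => // m IH'.
  rewrite [nseq _ _]/= -/(sorted le (b :: _)) sorted_all_cons IH' andbT.
  apply/allP => z; rewrite inE mem_nseq => /orP [/eqP ->|/andP [_ /eqP ->]]; exact: leqnn.
rewrite -/(sorted le (a :: _)) sorted_all_cons IH andbT all_cat !all_nseq /le leqnn H.
by rewrite !orbT.
Qed.

Lemma K1gen (a b c : 'I_n) i j k : a <= b -> b < c ->
  pl (nseq i a ++ nseq k b ++ flatten (nseq j [:: c; b]))
     (nseq j c ++ nseq i a ++ nseq (k + j) b).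
Proof.
move=> Hab Hbc; elim: j k => [|j IH] k; first by rewrite cats0 addn0; reflexivity.
have Hs : sorted le ((nseq i a ++ nseq k b) ++ [:: b])
  by rewrite -catA cats1 rcons_nseq sorted_nn.
have HM := moveC Hs Hbc.
transitivity ((c :: (nseq i a ++ nseq k b) ++ [:: b]) ++ flatten (nseq j [:: c; b])).
  have -> : nseq i a ++ nseq k b ++ flatten (nseq j.+1 [:: c; b]) =
    ((nseq i a ++ nseq k b) ++ [:: c; b]) ++ flatten (nseq j [:: c; b]) by rewrite -!catA.
  exact: pl_catr.
have -> : (c :: (nseq i a ++ nseq k b) ++ [:: b]) ++ flatten (nseq j [:: c; b]) =
  c :: (nseq i a ++ nseq k.+1 b ++ flatten (nseq j [:: c; b])).
  by rewrite -rcons_nseq -cats1 /= -!catA.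
rewrite (_ : k + j.+1 = k.+1 + j); last by rewrite addSnnS.
exact: cons_pl (IH k.+1).
Qed.

Lemma CB (b c : 'I_n) j : b < c ->
  pl (nseq j c ++ nseq j b) (flatten (nseq j [:: c; b])).
Proof.
move=> Hbc; elim: j => [|j IH]; first reflexivity.
rewrite -(rcons_nseq j [:: c; b]) flatten_rcons.
transitivity (nseq j c ++ c :: nseq j b ++ [:: b]).
  by rewrite -cat_rcons rcons_nseq cats1 rcons_nseq; reflexivity.
transitivity (nseq j c ++ nseq j b ++ [:: c; b]); last by rewrite catA; exact: pl_catr.
apply: pl_catl; symmetry; apply: moveC => //.
by rewrite cats1 rcons_nseq -(cat0s (nseq _ b)) (_ : [::] = nseq 0 b) // sorted_nn.
Qed.


Lemma K1 (a b c : 'I_n) i j l : a <= b -> b < c -> j <= l ->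
  pl (nseq i a ++ nseq j c ++ nseq l b) (nseq j c ++ nseq i a ++ nseq l b).
Proof.
move=> Hab Hbc Hjl.
rewrite -(subnKC Hjl) !nseqD.
transitivity (nseq i a ++ flatten (nseq j [:: c; b]) ++ nseq (l - j) b).
  by apply: pl_catl; rewrite catA; apply: pl_catr; exact: CB.
have H := K1gen i j 0 Hab Hbc.
rewrite catA (catA (nseq j c)) (catA (nseq j c ++ _)) -(catA (nseq j c)).
apply: pl_catr; exact: H.
Qed.

Definition compl (x : 'I_n) : 'I_n := rev_ord x.
Definition iota (w : word) : word := rev (map compl w).

Lemma iota_cat x y : iota (x ++ y) = iota y ++ iota x.
Proof. by rewrite /iota map_cat rev_cat. Qed.

Lemma iotaK : involutive iota.
Proof. by move=> w; rewrite /iota map_rev revK -map_comp map_id_in // => z _ /=; rewrite /compl rev_ordK. Qed.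

Lemma compl_lt (x y : 'I_n) : (compl x < compl y) = (y < x).
Proof.
rewrite /compl /=; have := ltn_ord x; have := ltn_ord y; lia.
Qed.
Lemma compl_le (x y : 'I_n) : (compl x <= compl y) = (y <= x).
Proof.
rewrite /compl /=; have := ltn_ord x; have := ltn_ord y; lia.
Qed.

Lemma iota_ks x y : ks x y -> ks (iota x) (iota y).
Proof.
case=> u v a b c H1 H2; rewrite !iota_cat.
- have := @knuth2 n (iota v) (iota u) (compl c) (compl b) (compl a).
  rewrite !compl_lt !compl_le; move/(_ H2 H1); by rewrite -!catA /iota /=.
- have := @knuth1 n (iota v) (iota u) (compl c) (compl b) (compl a).
  rewrite !compl_lt !compl_le; move/(_ H2 H1); by rewrite -!catA /iota /=.
Qed.

Lemma iota_pl x y : pl x y -> pl (iota x) (iota y).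
Proof.
elim=> [x' y' H| x'| x' y' _ IH| x' y' z' _ IH1 _ IH2].
- by apply: rst_step; apply: iota_ks.
- reflexivity.
- by symmetry.
- by transitivity (iota y').
Qed.

Lemma iota_nseq k x : iota (nseq k x) = nseq k (compl x).
Proof. by rewrite /iota map_nseq rev_nseq. Qed.

Lemma K2 (a b c : 'I_n) i j l : a < b -> b <= c -> j <= i ->
  pl (nseq i b ++ nseq j a ++ nseq l c) (nseq i b ++ nseq l c ++ nseq j a).
Proof.
move=> Hab Hbc Hji.
rewrite -(iotaK (nseq i b ++ _)) -(iotaK (nseq i b ++ nseq l c ++ _)).
apply: iota_pl; rewrite !iota_cat !iota_nseq -!catA.
apply: K1 => //; by rewrite ?compl_le ?compl_lt.
Qed.


Variable sigma : 'I_n -> nat.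
Hypothesis Hsig : forall a, 2 <= sigma a.

Definition ps : relation word := plax_sigma_cong sigma.
Definition d (a : 'I_n) := (sigma a).-1.
Lemma d_gt0 a : 0 < d a.
Proof. by rewrite /d; have := Hsig a; case: (sigma a) => [|[]]. Qed.

Global Instance ps_equiv : Equivalence ps.
Proof. split; [exact: rst_refl | exact: rst_sym | exact: rst_trans]. Qed.

Lemma pow_ctx p q x y : pow_step sigma x y -> pow_step sigma (p ++ x ++ q) (p ++ y ++ q).
Proof.
case=> u v a.
have := powstep sigma (p ++ u) (v ++ q) a; by rewrite -!catA.
Qed.

Lemma ps_ctx p q x y : ps x y -> ps (p ++ x ++ q) (p ++ y ++ q).
Proof.
elim=> [x' y' [H|H]| x'| x' y' _ IH| x' y' z' _ IH1 _ IH2].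
- by apply: rst_step; left; apply: knuth_ctx.
- by apply: rst_step; right; apply: pow_ctx.
- reflexivity.
- by symmetry.
- by transitivity (p ++ y' ++ q).
Qed.

Lemma ps_catl (x y z : word) : ps x y -> ps (z ++ x) (z ++ y).
Proof. by move=> H; have := ps_ctx z [::] H; rewrite !cats0. Qed.
Lemma ps_catr (x y z : word) : ps x y -> ps (x ++ z) (y ++ z).
Proof. by move=> H; have := ps_ctx [::] z H. Qed.
Lemma ps_cat (x y x' y' : word) : ps x x' -> ps y y' -> ps (x ++ y) (x' ++ y').
Proof. by move=> H1 H2; transitivity (x' ++ y); [apply: ps_catr | apply: ps_catl]. Qed.

Lemma pl_ps x y : pl x y -> ps x y.
Proof.
elim=> [x' y' H| x'| x' y' _ IH| x' y' z' _ IH1 _ IH2].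
- by apply: rst_step; left.
- reflexivity.
- by symmetry.
- by transitivity y'.
Qed.

Lemma pump1 (y : 'I_n) e : ps (nseq (e.+1 + d y) y) (nseq e.+1 y).
Proof.
have E : e.+1 + d y = e + sigma y.
  rewrite /d; have := Hsig y; case: (sigma y) => // s _; by rewrite addSnnS.
rewrite E nseqD -rcons_nseq -cats1.
have := powstep sigma (nseq e y) [::] y; rewrite !cats0 => H.
by apply: rst_step; right.
Qed.

Lemma pump (y : 'I_n) e m : ps (nseq (e.+1 + m * d y) y) (nseq e.+1 y).
Proof.
elim: m => [|m IH]; first by rewrite addn0; reflexivity.
have -> : e.+1 + m.+1 * d y = (e + m * d y).+1 + d y by rewrite mulSn; lia.
transitivity (nseq (e + m * d y).+1 y); first exact: pump1.
by rewrite -addSn.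
Qed.

Lemma ps_transfer (y : 'I_n) (p q r : word) a b :
  ps (p ++ nseq a.+1 y ++ q ++ nseq b.+2 y ++ r) (p ++ nseq a.+2 y ++ q ++ nseq b.+1 y ++ r).
Proof.
set D := size q * d y.
have HD : size q <= D by rewrite /D; have := d_gt0 y; nia.
transitivity (p ++ nseq (a.+1 + D) y ++ q ++ nseq (b.+2 + D) y ++ r).
  apply: ps_catl; apply: ps_cat; first by symmetry; apply: pump.
  apply: ps_catl; apply: ps_catr; by symmetry; apply: pump.
transitivity (p ++ nseq (a.+2 + D) y ++ q ++ nseq (b.+1 + D) y ++ r).
  apply: ps_catl; rewrite !catA; apply: ps_catr; rewrite -!catA; apply: pl_ps.
  have := @transfer_pl y q (a.+1 + D) (b.+2 + D).
  rewrite (_ : (b.+2 + D).-1 = b.+1 + D) ?addSn //; apply.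
  - by apply: leq_trans (count_size _ _) _; lia.
  - by apply: leq_ltn_trans (count_size _ _) _; lia.
  - by [].
apply: ps_catl; apply: ps_cat; first by apply: pump.
apply: ps_catl; apply: ps_catr; by apply: pump.
Qed.


Notation lift := (seq ('I_n * nat)).
Definition ex (s : lift) : word := flatten (map (fun p => nseq p.2.+1 p.1) s).
Definition skel (s : lift) : word := map fst s.

Lemma ex_cat s1 s2 : ex (s1 ++ s2) = ex s1 ++ ex s2.
Proof. by rewrite /ex map_cat flatten_cat. Qed.
Lemma ex_cons p s : ex (p :: s) = nseq p.2.+1 p.1 ++ ex s.
Proof. by []. Qed.

Lemma ex3 x1 i x2 j x3 l : ex [:: (x1, i); (x2, j); (x3, l)] = nseq i.+1 x1 ++ nseq j.+1 x2 ++ nseq l.+1 x3.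
Proof. by rewrite /ex /= cats0. Qed.
Lemma ex2 x1 i x2 j : ex [:: (x1, i); (x2, j)] = nseq i.+1 x1 ++ nseq j.+1 x2.
Proof. by rewrite /ex /= cats0. Qed.
Lemma ex1 x1 i : ex [:: (x1, i)] = nseq i.+1 x1.
Proof. by rewrite /ex /= cats0. Qed.

Definition liftR (X Y : word) :=
  forall s, skel s = X -> exists s', skel s' = Y /\ ps (ex s) (ex s').

Lemma liftR_ctx p q X Y : liftR X Y -> liftR (p ++ X ++ q) (p ++ Y ++ q).
Proof.
move=> H s Hs.
have E1 : skel (take (size p) s) = p by move: Hs; rewrite /skel map_take => ->; rewrite take_size_cat.
have E2 : skel (drop (size p) s) = X ++ q by move: Hs; rewrite /skel map_drop => ->; rewrite drop_size_cat.
set s' := drop (size p) s.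
have E3 : skel (take (size X) s') = X.
  by rewrite /skel map_take; move: E2; rewrite /skel => ->; rewrite take_size_cat.
have E4 : skel (drop (size X) s') = q.
  by rewrite /skel map_drop; move: E2; rewrite /skel => ->; rewrite drop_size_cat.
have [sY [HY1 HY2]] := H _ E3.
exists (take (size p) s ++ sY ++ drop (size X) s'); split.
  by rewrite /skel !map_cat -!/(skel _) E1 HY1 E4.
rewrite -{1}(cat_take_drop (size p) s) -/s' -{1}(cat_take_drop (size X) s') !ex_cat.
by apply: ps_catl; apply: ps_catr.
Qed.

Lemma liftR_refl X : liftR X X.
Proof. by move=> s Hs; exists s; split => //; reflexivity. Qed.
Lemma liftR_trans X Y Z : liftR X Y -> liftR Y Z -> liftR X Z.
Proof.
move=> H1 H2 s Hs; have [s1 [E1 P1]] := H1 s Hs; have [s2 [E2 P2]] := H2 s1 E1.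
by exists s2; split => //; transitivity (ex s1).
Qed.

Lemma lift_k1 (a b c : 'I_n) : a <= b -> b < c ->
  liftR [:: a; c; b] [:: c; a; b] /\ liftR [:: c; a; b] [:: a; c; b].
Proof.
move=> Hab Hbc; split.
- case=> [|[x1 i] [|[x2 j] [|[x3 l] []]]] //= [-> -> ->].
  exists [:: (c, j); (a, i); (b, l + j.+1 * d b)]; split => //.
  rewrite !ex3.
  transitivity (nseq i.+1 a ++ nseq j.+1 c ++ nseq (l.+1 + j.+1 * d b) b).
    by apply: ps_catl; apply: ps_catl; symmetry; apply: pump.
  apply: pl_ps; rewrite -addSn; apply: K1 => //.
  by have := d_gt0 b; nia.
- case=> [|[x1 j] [|[x2 i] [|[x3 l] []]]] //= [-> -> ->].
  exists [:: (a, i); (c, j); (b, l + j.+1 * d b)]; split => //.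
  rewrite !ex3.
  transitivity (nseq j.+1 c ++ nseq i.+1 a ++ nseq (l.+1 + j.+1 * d b) b).
    by apply: ps_catl; apply: ps_catl; symmetry; apply: pump.
  apply: pl_ps; rewrite -addSn; symmetry; apply: K1 => //.
  by have := d_gt0 b; nia.
Qed.

Lemma lift_k2 (a b c : 'I_n) : a < b -> b <= c ->
  liftR [:: b; a; c] [:: b; c; a] /\ liftR [:: b; c; a] [:: b; a; c].
Proof.
move=> Hab Hbc; split.
- case=> [|[x1 i] [|[x2 j] [|[x3 l] []]]] //= [-> -> ->].
  exists [:: (b, i + j.+1 * d b); (c, l); (a, j)]; split => //.
  rewrite !ex3.
  transitivity (nseq (i.+1 + j.+1 * d b) b ++ nseq j.+1 a ++ nseq l.+1 c).
    by apply: ps_catr; symmetry; apply: pump.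
  apply: pl_ps; rewrite -addSn; apply: K2 => //.
  by have := d_gt0 b; nia.
- case=> [|[x1 i] [|[x2 l] [|[x3 j] []]]] //= [-> -> ->].
  exists [:: (b, i + j.+1 * d b); (a, j); (c, l)]; split => //.
  rewrite !ex3.
  transitivity (nseq (i.+1 + j.+1 * d b) b ++ nseq l.+1 c ++ nseq j.+1 a).
    by apply: ps_catr; symmetry; apply: pump.
  apply: pl_ps; rewrite -addSn; symmetry; apply: K2 => //.
  by have := d_gt0 b; nia.
Qed.

Lemma lift_p2 (a : 'I_n) : liftR [:: a; a] [:: a] /\ liftR [:: a] [:: a; a].
Proof.
split.
- case=> [|[x1 i] [|[x2 j] []]] //= [-> ->].
  exists [:: (a, i + j.+1)]; split => //.
  by rewrite ex2 ex1 -nseqD addSn; reflexivity.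
- case=> [|[x1 e] []] //= [->].
  case: e => [|e].
    exists [:: (a, 0); (a, (d a).-1)]; split => //.
    rewrite ex2 ex1 -nseqD prednK ?d_gt0 //.
    symmetry; exact: (pump1 a 0).
  exists [:: (a, 0); (a, e)]; split => //.
  by rewrite ex2 ex1 -nseqD; reflexivity.
Qed.

Lemma lift_main u v : plax_sigma_cong (fun _ => 2) u v -> liftR u v /\ liftR v u.
Proof.
elim=> [x y [H|H]| x| x y _ [IH1 IH2]| x y z _ [IH1 IH2] _ [IH3 IH4]].
- case: H => p q a b c H1 H2.
  + by have [L1 L2] := lift_k1 H1 H2; split; apply: liftR_ctx.
  + by have [L1 L2] := lift_k2 H1 H2; split; apply: liftR_ctx.
- case: H => p q a.
  by have [L1 L2] := lift_p2 a; split; apply: liftR_ctx.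
- by split; apply: liftR_refl.
- by split.
- by split; [apply: (liftR_trans IH1 IH3) | apply: (liftR_trans IH4 IH2)].
Qed.


Definition evf (x : 'I_n) (w : word) : nat :=
  if count_mem x w is k.+1 then (k %% d x).+1 else 0.

Lemma evf_pow (u v : word) (x : 'I_n) : pow_step sigma u v -> evf x u = evf x v.
Proof.
case=> p q a; rewrite /evf !count_cat count_nseq /=.
case: eqP => Ha; last by rewrite !mul0n !addn0 !add0n.
have E : sigma a = (d a).+1 by rewrite /d; have := Hsig a; case: (sigma a).
subst a; rewrite E /=.
have -> : count_mem x p + (1 * (d x).+1 + count_mem x q) = (count_mem x p + count_mem x q + d x).+1 by lia.
have -> : count_mem x p + (1 + 0 + count_mem x q) = (count_mem x p + count_mem x q).+1 by lia.
by rewrite modnDr.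
Qed.

Lemma count_knuth (u v : word) (x : 'I_n) : ks u v -> count_mem x u = count_mem x v.
Proof. by case=> p q a b c _ _; rewrite !count_cat /=; lia. Qed.

Lemma count_comm (u v : word) (x : 'I_n) : comm_step u v -> count_mem x u = count_mem x v.
Proof. by case=> p q a b; rewrite !count_cat /=; lia. Qed.

Lemma ps_evf (u v : word) (x : 'I_n) : ps u v -> evf x u = evf x v.
Proof.
elim=> [x' y' [H|H]| x'| x' y' _ IH| x' y' z' _ IH1 _ IH2] //.
- by rewrite /evf (count_knuth x H).
- exact: evf_pow.
- by rewrite IH1.
Qed.

Lemma com_evf (u v : word) (x : 'I_n) : com_sigma_cong sigma u v -> evf x u = evf x v.
Proof.
elim=> [x' y' [H|H]| x'| x' y' _ IH| x' y' z' _ IH1 _ IH2] //.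
- by rewrite /evf (count_comm x H).
- exact: evf_pow.
- by rewrite IH1.
Qed.

Definition extra (x : 'I_n) (s : lift) := sumn (map (fun p => if p.1 == x then p.2 else 0) s).

Lemma extra_cat x s1 s2 : extra x (s1 ++ s2) = extra x s1 + extra x s2.
Proof. by rewrite /extra map_cat sumn_cat. Qed.

Lemma count_ex x s : count_mem x (ex s) = count_mem x (skel s) + extra x s.
Proof.
elim: s => [|[y e] s IH] //.
rewrite ex_cons count_cat IH count_nseq /extra /skel /= -/(extra x s) -/(skel s).
by case: (y == x) => /=; lia.
Qed.

Lemma ex_zero s : all (fun p : 'I_n * nat => p.2 == 0) s -> ex s = skel s.
Proof.
elim: s => [|[y e] s IH] //= /andP [/eqP -> H].
by rewrite ex_cons IH.
Qed.

Lemma lift_transfer s1 s2 s3 (y : 'I_n) a b :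
  ps (ex (s1 ++ (y, a) :: s2 ++ (y, b) :: s3)) (ex (s1 ++ (y, a + b) :: s2 ++ (y, 0) :: s3)).
Proof.
elim: b a => [|b IH] a; first by rewrite addn0; reflexivity.
transitivity (ex (s1 ++ (y, a.+1) :: s2 ++ (y, b) :: s3)); last by rewrite addnS -addSn.
rewrite !ex_cat !ex_cons !ex_cat !ex_cons /=; exact: ps_transfer.
Qed.

Lemma extra_pos (y : 'I_n) t : 0 < extra y t ->
  exists t1 t2 f, t = t1 ++ (y, f.+1) :: t2.
Proof.
elim: t => [|[z e] t IH] //=.
rewrite /extra /= -/(extra y t).
case: eqP => Hz; last by rewrite add0n => /IH [t1 [t2 [f ->]]]; exists ((z, e) :: t1), t2, f.
case: e => [|e]; last by exists [::], t, e; rewrite Hz.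
by rewrite add0n => /IH [t1 [t2 [f ->]]]; exists ((z, 0) :: t1), t2, f.
Qed.

Definition nz (s : lift) := count (fun p : 'I_n * nat => p.2 != 0) s.
Definition tot (s : lift) := sumn (map snd s).
Definition msr (s : lift) := tot s * (size s).+1 + nz s.

Lemma msr_lt s s' : size s' = size s ->
  (tot s' < tot s \/ (tot s' = tot s /\ nz s' < nz s)) -> msr s' < msr s.
Proof.
rewrite /msr => Hs; have := count_size (fun p : 'I_n * nat => p.2 != 0) s'.
rewrite -/(nz s') Hs => H [H1|[H1 H2]]; last by rewrite H1; lia.
have : (tot s').+1 * (size s).+1 <= tot s * (size s).+1 by rewrite leq_mul2r H1 orbT.
rewrite mulSn; lia.
Qed.

Lemma F s : (forall x, evf x (ex s) = evf x (skel s)) -> ps (ex s) (skel s).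
Proof.
move Hk: (msr s) => k; elim/ltn_ind: k s Hk => k IH s Hk H.
case Hall: (all (fun p : 'I_n * nat => p.2 == 0) s).
  by rewrite ex_zero //; reflexivity.
have : ~~ all (fun p : 'I_n * nat => p.2 == 0) s by rewrite Hall.
rewrite -has_predC => /hasP [[y e] Hp /= He].
case/splitPr: Hp H Hk Hall => s1 s2 H Hk _.
case: e He H Hk => [|e] // _ H Hk.
have skelE : forall s1 s2 (e f : nat), skel (s1 ++ (y, e) :: s2) = skel (s1 ++ (y, f) :: s2).
  by move=> t1 t2 e1 f1; rewrite /skel !map_cat.
have conclude : forall s', skel s' = skel (s1 ++ (y, e.+1) :: s2) ->
    ps (ex (s1 ++ (y, e.+1) :: s2)) (ex s') -> msr s' < k -> ps (ex (s1 ++ (y, e.+1) :: s2)) (skel (s1 ++ (y, e.+1) :: s2)).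
  move=> s' Hs' Hps Hm; transitivity (ex s') => //; rewrite -Hs'.
  apply: (IH _ Hm) => // x; rewrite Hs' -H; symmetry; exact: ps_evf.
have sizeE : forall s1 s2 (e f : nat), size (s1 ++ (y, e) :: s2) = size (s1 ++ (y, f) :: s2).
  by move=> t1 t2 e1 f1; rewrite !size_cat.
have totE : forall s1 s2 e, tot (s1 ++ (y, e) :: s2) = tot s1 + e + tot s2.
  by move=> t1 t2 e1; rewrite /tot map_cat sumn_cat /=; lia.
have nzE : forall s1 s2 e, nz (s1 ++ (y, e) :: s2) = nz s1 + (e != 0) + nz s2.
  by move=> t1 t2 e1; rewrite /nz count_cat /=; lia.
case: (leqP (d y) e.+1) => Hd.
  apply: (conclude (s1 ++ (y, e.+1 - d y) :: s2)); first exact: skelE.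
    rewrite !ex_cat !ex_cons; apply: ps_catl; apply: ps_catr.
    have -> : (y, e.+1).2.+1 = (e.+1 - d y).+1 + d y by rewrite /=; lia.
    exact: pump1.
  rewrite -Hk; apply: msr_lt; first exact: sizeE.
  left; rewrite !totE; have := d_gt0 y; lia.
have Hy : y \in skel (s1 ++ (y, e.+1) :: s2) by rewrite /skel map_cat mem_cat inE eqxx orbT.
have Hmod : extra y (s1 ++ (y, e.+1) :: s2) %% d y = 0.
  have := H y; rewrite /evf count_ex.
  move: Hy; rewrite -has_pred1 has_count; case: (count_mem y _) => // C _ [].
  move=> /eqP; rewrite -{2}(addn0 C) eqn_modDl mod0n => /eqP //.
have Hpos : 0 < extra y s1 + extra y s2.
  move: Hmod; rewrite extra_cat /extra /= eqxx -/(extra y s1) -/(extra y s2).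
  case E0 : (extra y s1 + extra y s2) => [|m] //.
  have -> : extra y s1 + (e.+1 + extra y s2) = e.+1 by lia.
  by rewrite modn_small.
case: (posnP (extra y s2)) => H2.
  have H1 : 0 < extra y s1 by lia.
  have [t1 [t2 [f E1]]] := extra_pos H1; subst s1.
  apply: (conclude (t1 ++ (y, f.+1 + e.+1) :: t2 ++ (y, 0) :: s2)).
  - by rewrite /skel -catA !map_cat /= !map_cat.
  - by rewrite -catA /=; exact: lift_transfer.
  - rewrite -Hk; apply: msr_lt.
      by rewrite !size_cat /= !size_cat /=; lia.
    right; rewrite -catA /= !totE !nzE; split; [|rewrite /nz /=]; lia.
have [t1 [t2 [f E2]]] := extra_pos H2; subst s2.
apply: (conclude (s1 ++ (y, e.+1 + f.+1) :: t1 ++ (y, 0) :: t2)).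
- by rewrite /skel !map_cat /= !map_cat.
- exact: lift_transfer.
- rewrite -Hk; apply: msr_lt.
    by rewrite !size_cat /= !size_cat /=; lia.
  right; rewrite !totE !nzE /=; split; lia.
Qed.

Theorem main_sec (u v : word) :
  plax_sigma_cong (fun _ => 2) u v -> com_sigma_cong sigma u v -> ps u v.
Proof.
move=> H1 H2.
have [L _] := lift_main H1.
have Hs0 : skel [seq (x, 0) | x <- u] = u by rewrite /skel -map_comp map_id.
have [s' [Hs' Hps]] := L _ Hs0.
have Eu : ex [seq (x, 0) | x <- u] = u by elim: u {H1 H2 L Hps Hs0} => // x u IH; rewrite map_cons ex_cons IH.
rewrite Eu in Hps.
transitivity (ex s') => //.
rewrite -Hs'; apply: F => x.
rewrite Hs' -(com_evf x H2); symmetry; exact: ps_evf.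
Qed.

End Pl.

Unset Implicit Arguments.
Theorem mainTheorem1 (n : nat) (sigma : 'I_n -> nat) :
  (forall a, 2 <= sigma a) ->
  forall u v : seq 'I_n,
    plax_sigma_cong (fun _ => 2) u v ->
    com_sigma_cong sigma u v ->
    plax_sigma_cong sigma u v.
Proof. move=> Hs u v H1 H2; exact: (main_sec Hs H1 H2). Qed.
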